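(* Let $T$ be a CPTP map with operator-sum representation $\{M_k\}$ and $\mathcal{H}_S$ a GAS subspace, and let $\mathcal{H}=\mathcal{H}_S\oplus\mathcal{H}_{T_1}\oplus\cdots\oplus\mathcal{H}_{T_N}$ be the decomposition produced by the DID construction started from $\mathcal{H}_S$. Then for $1\le n\le N$, $$\mathrm{supp}(T^{*n}(\Pi_S))=\mathcal{H}_S\oplus\bigoplus_{i=1}^n\mathcal{H}_{T_i},$$ and for $n>N$, $\mathrm{supp}(T^{*n}(\Pi_S))=\mathcal{H}$. In particular the DID subspaces do not depend on the chosen operator-sum representation.
   Context: $\mathcal{H}$ is a finite-dimensional complex Hilbert space; $T$ is CPTP: $T(\rho)=\sum_kM_k\rho M_k^\dagger$, $\sum_kM_k^\dagger M_k=I$, with dual $T^*(A)=\sum_kM_k^\dagger AM_k$. $\Pi_S$ is the orthogonal projection onto $\mathcal{H}_S$; $\mathrm{supp}(X)=(\ker X)^\perp$. $\mathcal{H}_S$ is invariant if $\rho\ge0$, $\mathrm{supp}(\rho)\subseteq\mathcal{H}_S$ implies $\mathrm{supp}(T(\rho))\subseteq\mathcal{H}_S$; an invariant $\mathcal{H}_S$ is GAS if $\lim_n\|T^n(\rho)-\Pi_ST^n(\rho)\Pi_S\|=0$ for every density operator $\rho$. DID construction: $\mathcal{H}_{S_1}=\mathcal{H}_S$, $\mathcal{H}_{R_1}=\mathcal{H}_S^\perp$; at step $i$, $M_{k,P'_i}=\Pi_{S_i}M_k|_{\mathcal{H}_{R_i}}:\mathcal{H}_{R_i}\to\mathcal{H}_{S_i}$,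 $\mathcal{H}_{R_{i+1}}=\bigcap_k\ker(M_{k,P'_i})$. (1) If $\mathcal{H}_{R_{i+1}}=\mathcal{H}_{R_i}$, set $\mathcal{H}_{T_i}=\mathcal{H}_{R_i}$ and stop (unsuccessful). (2) If $\mathcal{H}_{R_{i+1}}=\{0\}$, set $\mathcal{H}_{T_i}=\mathcal{H}_{R_i}$ and stop (successful). (3) Otherwise $\mathcal{H}_{T_i}$ is the orthogonal complement of $\mathcal{H}_{R_{i+1}}$ in $\mathcal{H}_{R_i}$, $\mathcal{H}_{S_{i+1}}=\mathcal{H}_{S_i}\oplus\mathcal{H}_{T_i}$, iterate. $N$ is the index of the final step. *)

(* Defs.v *)
(* Finite-dimensional complex Hilbert space = column vectors
   'cV[C]_n over a numeric closed field C (stand-in for the complex numbers).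
   Operators are n x n matrices acting on column vectors (v |-> A *m v).
   A subspace V of 'cV_n is represented (mxalgebra style) by a square matrix
   W : 'M_n whose ROW space is { v^T | v \in V }. *)
From HB Require Import structures.
From mathcomp Require Import all_boot all_order all_algebra.
Set Implicit Arguments. Unset Strict Implicit. Unset Printing Implicit Defensive.
Import Order.TTheory GRing.Theory Num.Theory.
Local Open Scope ring_scope.

Section QDefs.
Variable C : numClosedFieldType.
Variable n : nat.

Definition adj (p q : nat) (A : 'M[C]_(p, q)) : 'M[C]_(q, p) :=
  (map_mx Num.conj A)^T.

Definition hermitian (A : 'M[C]_n) : Prop := adj A = A.

Definition psd (A : 'M[C]_n) : Prop :=
  hermitian A /\ forall v : 'cV[C]_n, 0 <= (adj v *m A *m v) 0 0.

Definition density (rho : 'M[C]_n) : Prop := psd rho /\ \tr rho = 1.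

Definition orth_proj (P : 'M[C]_n) : Prop := hermitian P /\ P *m P = P.

Definition range_sp (A : 'M[C]_n) : 'M[C]_n := A^T.

Definition orth (W : 'M[C]_n) : 'M[C]_n := kermx (adj W).

Definition ker_sp (X : 'M[C]_n) : 'M[C]_n := kermx X^T.

Definition supp (X : 'M[C]_n) : 'M[C]_n := orth (ker_sp X).

Definition kraus (K : nat) (M : 'I_K -> 'M[C]_n) (rho : 'M[C]_n) : 'M[C]_n :=
  \sum_(k < K) M k *m rho *m adj (M k).

Definition kraus_dual (K : nat) (M : 'I_K -> 'M[C]_n) (A : 'M[C]_n) : 'M[C]_n :=
  \sum_(k < K) adj (M k) *m A *m M k.

Definition trace_preserving (K : nat) (M : 'I_K -> 'M[C]_n) : Prop :=
  \sum_(k < K) adj (M k) *m M k = 1%:M.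

Definition invariant (K : nat) (M : 'I_K -> 'M[C]_n) (P : 'M[C]_n) : Prop :=
  forall rho, psd rho -> (supp rho <= range_sp P)%MS ->
    (supp (kraus M rho) <= range_sp P)%MS.

(* a matrix norm (all norms are equivalent in finite dimension) *)
Definition mxnorm (A : 'M[C]_n) : C := \sum_i \sum_j `|A i j|.

Definition GAS (K : nat) (M : 'I_K -> 'M[C]_n) (P : 'M[C]_n) : Prop :=
  invariant M P /\
  forall rho, density rho ->
    forall eps : C, 0 < eps -> exists N0 : nat, forall m, (N0 <= m)%N ->
      mxnorm (iter m (kraus M) rho - P *m iter m (kraus M) rho *m P) < eps.

Section DID.
Variables (K : nat) (M : 'I_K -> 'M[C]_n) (P : 'M[C]_n).

(* R_{i+1} = { v in R_i | forall k, Pi_{S_i} M_k v = 0 } *)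
Definition did_nextR (Si Ri : 'M[C]_n) : 'M[C]_n :=
  (Ri :&: \bigcap_(k < K) kermx ((M k)^T *m adj Si))%MS.

Definition did_stop (Ri Rn : 'M[C]_n) : bool :=
  ((Rn == Ri)%MS || (Rn == (0 : 'M[C]_n))%MS).

Definition did_Tof (Ri Rn : 'M[C]_n) : 'M[C]_n :=
  if did_stop Ri Rn then Ri else (Ri :&: orth Rn)%MS.

(* did k = (S_{k+1}, R_{k+1}) *)
Fixpoint did (k : nat) : 'M[C]_n * 'M[C]_n :=
  match k with
  | 0 => (range_sp P, orth (range_sp P))
  | k'.+1 => let: (Si, Ri) := did k' in
             let Rn := did_nextR Si Ri in ((Si + did_Tof Ri Rn)%MS, Rn)
  end.

(* for i >= 1 *)
Definition DID_S (i : nat) : 'M[C]_n := (did i.-1).1.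
Definition DID_R (i : nat) : 'M[C]_n := (did i.-1).2.
Definition DID_T (i : nat) : 'M[C]_n := did_Tof (DID_R i) (DID_R i.+1).

Definition DID_final (N : nat) : Prop :=
  (1 <= N)%N /\ did_stop (DID_R N) (DID_R N.+1) /\
  forall i, (1 <= i < N)%N -> ~~ did_stop (DID_R i) (DID_R i.+1).

End DID.
End QDefs.

(* Main.v *)
Require Import Defs.
From HB Require Import structures.
From mathcomp Require Import all_boot all_order all_algebra.
Set Implicit Arguments. Unset Strict Implicit. Unset Printing Implicit Defensive.
Import Order.TTheory GRing.Theory Num.Theory.
Local Open Scope ring_scope.

Section Adj.
Variable C : numClosedFieldType.

Lemma adjM p q r (A : 'M[C]_(p,q)) (B : 'M[C]_(q,r)) : adj (A *m B) = adj B *m adj A.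
Proof. by rewrite /adj map_mxM trmx_mul. Qed.
Lemma adjK p q (A : 'M[C]_(p,q)) : adj (adj A) = A.
Proof. by apply/matrixP=> i j; rewrite /adj !mxE conjCK. Qed.
Lemma rank_adj p q (A : 'M[C]_(p,q)) : \rank (adj A) = \rank A.
Proof. by rewrite /adj mxrank_tr mxrank_map. Qed.
Lemma adjD p q (A B : 'M[C]_(p,q)) : adj (A + B) = adj A + adj B.
Proof. by apply/matrixP=> i j; rewrite /adj !mxE rmorphD. Qed.
Lemma adjN p q (A : 'M[C]_(p,q)) : adj (- A) = - adj A.
Proof. by apply/matrixP=> i j; rewrite /adj !mxE rmorphN. Qed.
Lemma adj0 p q : adj (0 : 'M[C]_(p,q)) = 0.
Proof. by apply/matrixP=> i j; rewrite /adj !mxE rmorph0. Qed.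
Lemma adj1 p : adj (1%:M : 'M[C]_p) = 1%:M.
Proof. by apply/matrixP=> i j; rewrite /adj !mxE eq_sym rmorph_nat. Qed.
Lemma adj_sum p q I (r : seq I) (F : I -> 'M[C]_(p,q)) :
  adj (\sum_(i <- r) F i) = \sum_(i <- r) adj (F i).
Proof. exact: (big_morph _ (fun A B => adjD A B) (adj0 _ _)). Qed.
Lemma adj_col p1 p2 q (A : 'M[C]_(p1,q)) (B : 'M[C]_(p2,q)) :
  adj (col_mx A B) = row_mx (adj A) (adj B).
Proof. by rewrite /adj map_col_mx tr_col_mx. Qed.

Lemma gram_diag_ge0 m p (X : 'M[C]_(m,p)) i : 0 <= (X *m adj X) i i.
Proof.
rewrite !mxE; apply: sumr_ge0 => j _; rewrite /adj !mxE -normCK.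
exact: exprn_ge0.
Qed.

Lemma sum_gram0 (I : eqType) (r : seq I) m p (X : I -> 'M[C]_(m,p)) :
  \sum_(k <- r) X k *m adj (X k) = 0 -> forall k, k \in r -> X k = 0.
Proof.
move=> H k kr; apply/matrixP=> i j; rewrite mxE.
have Hi : \sum_(k <- r) (X k *m adj (X k)) i i == 0.
  by rewrite -summxE H mxE.
rewrite psumr_eq0 in Hi; last by move=> ? _; exact: gram_diag_ge0.
have /allP/(_ k kr)/= := Hi; rewrite mxE psumr_eq0; last first.
  by move=> l _; rewrite /adj !mxE -normCK exprn_ge0.
move=> /allP/(_ j (mem_index_enum _))/=; rewrite /adj !mxE -normCK.
by rewrite expf_eq0 /= normr_eq0 => /eqP.
Qed.

Lemma gram0 m p (X : 'M[C]_(m,p)) : X *m adj X = 0 -> X = 0.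
Proof.
move=> H; have := @sum_gram0 unit [:: tt] m p (fun _ => X).
by rewrite big_seq1 => /(_ H tt); apply; rewrite inE.
Qed.

End Adj.

Section Orth.
Variable C : numClosedFieldType.
Variable n : nat.
Implicit Types W S R : 'M[C]_n.

Lemma mem_orth m (A : 'M[C]_(m,n)) W : (A <= orth W)%MS = (A *m adj W == 0).
Proof. by rewrite /orth sub_kermx. Qed.

Lemma orth_perp m1 m2 (A : 'M[C]_(m1,n)) (B : 'M[C]_(m2,n)) W :
  (A <= orth W)%MS -> (B <= W)%MS -> A *m adj B = 0.
Proof.
rewrite mem_orth => /eqP H /submxP [D ->].
by rewrite adjM mulmxA H mul0mx.
Qed.

Lemma perp_sym m1 m2 (A : 'M[C]_(m1,n)) (B : 'M[C]_(m2,n)) :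
  A *m adj B = 0 -> B *m adj A = 0.
Proof. by move=> H; rewrite -[B]adjK -adjM H adj0. Qed.

Lemma orth_anti W1 W2 : (W1 <= W2)%MS -> (orth W2 <= orth W1)%MS.
Proof. by move=> H; rewrite mem_orth (orth_perp (submx_refl _) H). Qed.

Lemma orth_eq W1 W2 : (W1 == W2)%MS -> (orth W1 == orth W2)%MS.
Proof. by case/andP=> H1 H2; rewrite !orth_anti. Qed.

Lemma sub_orth_orth W : (W <= orth (orth W))%MS.
Proof.
rewrite mem_orth; apply/eqP/perp_sym.
by rewrite /orth mulmx_ker.
Qed.

Lemma rank_orth W : \rank (orth W) = (n - \rank W)%N.
Proof. by rewrite /orth mxrank_ker rank_adj. Qed.

Lemma orthK W : (orth (orth W) == W)%MS.
Proof.
have H := sub_orth_orth W.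
rewrite H andbT.
have := mxrank_leqif_sup H; rewrite !rank_orth subKn ?rank_leq_col //.
by move=> [_ <-].
Qed.

Lemma cap_orth0 m (A : 'M[C]_(m,n)) W : (A <= W)%MS -> (A <= orth W)%MS -> A = 0.
Proof. by move=> H1 H2; apply: gram0; apply: orth_perp H2 H1. Qed.

Lemma orth_full W : (W + orth W == 1%:M)%MS.
Proof.
rewrite submx1 /= -(mxrank_leqif_sup (submx1 _)).
have := mxrank_sum_cap W (orth W).
have -> : (W :&: orth W)%MS = 0 by apply: cap_orth0; [exact: capmxSl | exact: capmxSr].
rewrite mxrank0 addn0 rank_orth subnKC ?rank_leq_col // => ->.
by rewrite mxrank1.
Qed.

Lemma mem_orth_adds m (A : 'M[C]_(m,n)) W1 W2 :
  (A <= orth (W1 + W2)%MS)%MS = (A <= orth W1)%MS && (A <= orth W2)%MS.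
Proof.
apply/idP/andP.
  by move=> H; split; apply: (submx_trans H); apply: orth_anti;
     [exact: addsmxSl | exact: addsmxSr].
case=> H1 H2; rewrite mem_orth.
have /submxP [D ->] : ((W1 + W2)%MS <= col_mx W1 W2)%MS by rewrite addsmxE.
rewrite adjM adj_col mulmxA mul_mx_row.
by rewrite (orth_perp H1 (submx_refl _)) (orth_perp H2 (submx_refl _)) row_mx0 mul0mx.
Qed.

Lemma orth0 : (orth (0 : 'M[C]_n) == 1%:M)%MS.
Proof. by rewrite /orth adj0; apply/eqmxP; exact: kermx0. Qed.

Lemma orth_step S R1 R2 :
  (R1 == orth S)%MS -> (R2 <= R1)%MS ->
  (orth (S + (R1 :&: orth R2))%MS == R2)%MS.
Proof.
move=> HR1 H21; apply/andP; split; last first.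
  rewrite mem_orth_adds; apply/andP; split.
    by apply: (submx_trans H21); case/andP: HR1.
  apply: (submx_trans (sub_orth_orth R2)); apply: orth_anti; exact: capmxSr.
set X := orth _.
have XR1 : (X <= R1)%MS.
  apply: (submx_trans _ (proj2 (andP HR1))); apply: orth_anti; exact: addsmxSl.
have Xcap : (X <= orth (R1 :&: orth R2))%MS.
  apply: orth_anti; exact: addsmxSr.
have /sub_addsmxP [[a b] /= EX] : (X <= R2 + orth R2)%MS.
  by rewrite (eqmxP (orth_full R2)) submx1.
set Y := b *m orth R2.
have EY : Y = X - a *m R2 by rewrite EX addrC addKr.
have YoR2 : (Y <= orth R2)%MS by exact: submxMl.
have aR2 : (a *m R2 <= R1)%MS by apply: submx_trans H21; exact: submxMl.
have YR1 : (Y <= R1)%MS by rewrite EY addmx_sub // eqmx_opp.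
have Ycap : (Y <= R1 :&: orth R2)%MS by rewrite sub_capmx YR1.
have h1 : X *m adj Y = 0 := orth_perp Xcap Ycap.
have h2 : (a *m R2) *m adj Y = 0.
  by apply: perp_sym; apply: (orth_perp YoR2); exact: submxMl.
have Y0 : Y = 0 by apply: gram0; rewrite {1}EY mulmxBl h1 h2 subr0.
by rewrite EX -/Y Y0 addr0 submxMl.
Qed.
End Orth.

Section Gram.
Variable C : numClosedFieldType.
Variable n : nat.

Lemma adj_tr p q (B : 'M[C]_(p,q)) : adj (B^T) = (adj B)^T.
Proof. by apply/matrixP=> i j; rewrite /adj !mxE. Qed.

Lemma trmx_sum' p q I (r : seq I) (F : I -> 'M[C]_(p,q)) :
  (\sum_(i <- r) F i)^T = \sum_(i <- r) (F i)^T.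
Proof.
have D A B : (A + B)^T = A^T + B^T :> 'M[C]_(q,p) by apply/matrixP=> i j; rewrite !mxE.
exact: (big_morph _ D (trmx0 _ _ _)).
Qed.

Lemma ker_gram K p m (H : 'I_K -> 'M[C]_(p,n)) (A : 'M[C]_(m,n)) :
  (A <= ker_sp (\sum_(k < K) adj (H k) *m H k))%MS = [forall k, A *m (H k)^T == 0].
Proof.
rewrite /ker_sp sub_kermx trmx_sum' mulmx_sumr.
under eq_bigr => k _ do rewrite trmx_mul mulmxA.
apply/eqP/forallP.
  move=> E k; apply/eqP.
  have := @sum_gram0 C _ (index_enum 'I_K) m p (fun k => A *m (H k)^T).
  apply; last exact: mem_index_enum.
  apply: (@eq_trans _ _ ((\sum_k A *m (H k)^T *m (adj (H k))^T) *m adj A)); last first.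
    by rewrite E mul0mx.
  rewrite mulmx_suml; apply: eq_bigr => i _; by rewrite adjM adj_tr !mulmxA.
by move=> E; apply: big1 => k _; rewrite (eqP (E k)) mul0mx.
Qed.

Lemma ker_gram1 p m (G : 'M[C]_(p,n)) (A : 'M[C]_(m,n)) :
  (A <= ker_sp (adj G *m G))%MS = (A *m G^T == 0).
Proof.
have := @ker_gram 1 p m (fun _ => G) A; rewrite big_ord1 => ->.
by apply/forallP/idP => [/(_ ord0)|H k].
Qed.

Definition gram (A : 'M[C]_n) := exists p (G : 'M[C]_(p,n)), A = adj G *m G.

Lemma gram0m : gram 0.
Proof. by exists 0%N, 0; rewrite mulmx0. Qed.

Lemma gramD A B : gram A -> gram B -> gram (A + B).
Proof.
move=> [p [G ->]] [q [H ->]]; exists (p + q)%N, (col_mx G H).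
by rewrite adj_col mul_row_col.
Qed.

Lemma gram_sum I (r : seq I) (F : I -> 'M[C]_n) :
  (forall i, gram (F i)) -> gram (\sum_(i <- r) F i).
Proof.
move=> H; elim/big_rec: _ => [|i x _ Hx]; first exact: gram0m.
exact: gramD.
Qed.

End Gram.

Section Kraus.
Variable C : numClosedFieldType.
Variables (n K : nat) (M : 'I_K -> 'M[C]_n) (P : 'M[C]_n).
Hypothesis TP : trace_preserving M.
Hypothesis OP : orth_proj P.

Let AP : adj P = P. Proof. by case: OP. Qed.
Let PP : P *m P = P. Proof. by case: OP. Qed.

Lemma P_gram : P = adj P *m P. Proof. by rewrite AP PP. Qed.

Lemma ker_orth_range : ker_sp P = orth (range_sp P).
Proof. by rewrite /ker_sp /orth /range_sp adj_tr AP. Qed.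

Definition Kk m := ker_sp (iter m (kraus_dual M) P).

Lemma gram_iter m : gram (iter m (kraus_dual M) P).
Proof.
elim: m => [|m [p [G E]]] /=; first by exists n, P; exact: P_gram.
rewrite E /kraus_dual; apply: gram_sum => k; exists p, (G *m M k).
by rewrite adjM !mulmxA.
Qed.

Lemma kerStep m q (A : 'M[C]_(q,n)) :
  (A <= Kk m.+1)%MS = [forall k, A *m (M k)^T <= Kk m]%MS.
Proof.
have [p [G E]] := gram_iter m.
rewrite /Kk iterS E /kraus_dual.
have -> : \sum_(k < K) adj (M k) *m (adj G *m G) *m M k =
          \sum_(k < K) adj (G *m M k) *m (G *m M k).
  by apply: eq_bigr => k _; rewrite adjM !mulmxA.
rewrite ker_gram; apply: eq_forallb => k.
by rewrite ker_gram1 trmx_mul mulmxA.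
Qed.

Lemma inv_cons : Defs.invariant M P -> forall k, M k *m P = P *m M k *m P.
Proof.
move=> INV k.
pose H := fun i => adj (M i *m P).
have Erho : kraus M P = \sum_(k < K) adj (H k) *m H k.
  rewrite /kraus; apply: eq_bigr => i _.
  by rewrite /H adjK adjM AP -!mulmxA (mulmxA P P) PP.
have psdP : psd P.
  split; first exact: AP.
  move=> v; rewrite P_gram mulmxA -adjM -mulmxA.
  have := gram_diag_ge0 (adj (P *m v)) 0; by rewrite adjK.
have suppP : (supp P <= range_sp P)%MS.
  by rewrite /supp ker_orth_range; case/andP: (orthK (range_sp P)).
have H1 := INV P psdP suppP.
have H2 : (ker_sp P <= ker_sp (kraus M P))%MS.
  rewrite ker_orth_range; apply: (submx_trans (orth_anti H1)).
  by rewrite /supp; case/andP: (orthK (ker_sp (kraus M P))).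
set Q := 1%:M - P.
have HQ : ((Q)^T <= ker_sp P)%MS.
  by rewrite /ker_sp sub_kermx -trmx_mul mulmxBr mulmx1 PP subrr trmx0.
have := submx_trans HQ H2; rewrite Erho ker_gram => /forallP /(_ k) /eqP.
rewrite -trmx_mul => /(congr1 trmx); rewrite trmxK trmx0 => /(congr1 (fun X => adj X)).
rewrite adjM adjK adj0 /Q adjD adjN adj1 AP mulmxA mulmxBl mul1mx => /eqP.
by rewrite mulmxBl subr_eq0 => /eqP.
Qed.

Lemma Kmono0 : Defs.invariant M P -> (Kk 1 <= Kk 0)%MS.
Proof.
move=> INV; have E := inv_cons INV.
have /forallP H := (eqbLR (kerStep 0 (Kk 1)) (submx_refl _)).
rewrite /Kk /= /ker_sp sub_kermx.
set A := kermx _.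
have HA k : P *m M k *m A^T = 0.
  have := H k; rewrite /Kk /= /ker_sp sub_kermx => /eqP /(congr1 trmx).
  by rewrite -/A !trmx_mul !trmxK trmx0 mulmxA.
suff : P *m A^T = 0 by move/(congr1 trmx); rewrite trmx_mul trmxK trmx0 => ->.
rewrite -[P in LHS]mulmx1 -TP /trace_preserving mulmx_sumr mulmx_suml.
apply: big1 => k _.
have -> : P *m (adj (M k) *m M k) = P *m adj (M k) *m P *m M k.
  have F : P *m adj (M k) = P *m adj (M k) *m P.
    by rewrite -{1}AP -adjM E !adjM AP mulmxA.
  by rewrite mulmxA {1}F.
by rewrite -!mulmxA (mulmxA P (M k) A^T) HA !mulmx0.
Qed.

Lemma Kmono : Defs.invariant M P -> forall m, (Kk m.+1 <= Kk m)%MS.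
Proof.
move=> INV; elim=> [|m IH]; first exact: Kmono0.
rewrite kerStep; apply/forallP => k.
apply: submx_trans IH.
have := eqbLR (kerStep m.+1 (Kk m.+2)) (submx_refl _).
by move/forallP/(_ k).
Qed.

End Kraus.

Section DIDsec.
Variable C : numClosedFieldType.
Variables (n K : nat) (M : 'I_K -> 'M[C]_n) (P : 'M[C]_n).
Hypothesis TP : trace_preserving M.
Hypothesis OP : orth_proj P.
Hypothesis INV : Defs.invariant M P.

Definition sS k := (did M P k).1.
Definition rR k := (did M P k).2.

Lemma sS_S k : sS k.+1 = (sS k + did_Tof (rR k) (rR k.+1))%MS.
Proof. by rewrite /sS /rR /=; case: (did M P k). Qed.
Lemma rR_S k : rR k.+1 = did_nextR M (sS k) (rR k).
Proof. by rewrite /sS /rR /=; case: (did M P k). Qed.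

Lemma mem_nextR q (A : 'M[C]_(q,n)) S R :
  (A <= did_nextR M S R)%MS = (A <= R)%MS && [forall j, A *m (M j)^T <= orth S]%MS.
Proof.
rewrite /did_nextR sub_capmx; congr (_ && _).
apply/sub_bigcapmxP/forallP => H j.
  by move: (H j isT); rewrite sub_kermx mem_orth mulmxA.
by move=> _; move: (H j); rewrite sub_kermx mem_orth mulmxA.
Qed.

Lemma rR_sub k : (rR k.+1 <= rR k)%MS.
Proof. by have := submx_refl (rR k.+1); rewrite {2}rR_S mem_nextR => /andP[]. Qed.

Definition good k := (Kk M P k == rR k)%MS && (rR k == orth (sS k))%MS.

Lemma good0 : good 0.
Proof. by rewrite /good /Kk /= ker_orth_range //; apply/andP; split; apply/eqmxP. Qed.

Lemma Kk_sub0 k : (Kk M P k <= Kk M P 0)%MS.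
Proof.
elim: k => [|k IH]; first exact: submx_refl.
exact: submx_trans (Kmono TP OP INV k) IH.
Qed.

Lemma good_K k : good k -> (Kk M P k.+1 == rR k.+1)%MS.
Proof.
case/andP=> /eqmxP HK /eqmxP HR; apply/andP; split.
  rewrite rR_S mem_nextR; apply/andP; split.
    by rewrite -HK; exact: Kmono.
  apply/forallP => j; rewrite -HR -HK.
  by have := eqbLR (kerStep M OP k (Kk M P k.+1)) (submx_refl _) => /forallP.
rewrite kerStep //; apply/forallP => j; rewrite HK HR.
by have := submx_refl (rR k.+1); rewrite {2}rR_S mem_nextR => /andP[_ /forallP].
Qed.

Lemma Tof_eq k : (did_stop (rR k) (rR k.+1) -> (rR k.+1 == (0 : 'M[C]_n))%MS) ->
  (did_Tof (rR k) (rR k.+1) == rR k :&: orth (rR k.+1))%MS.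
Proof.
move=> H; rewrite /did_Tof; case: ifP => [/H H0|_]; last by apply/eqmxP.
have F : row_full (orth (rR k.+1)).
  by rewrite /row_full rank_orth (eqmx_rank H0) mxrank0 subn0.
by apply/eqmxP/eqmx_sym; exact: capmxT F.
Qed.

Lemma good_S k : good k -> (did_stop (rR k) (rR k.+1) -> (rR k.+1 == (0 : 'M[C]_n))%MS) ->
  good k.+1.
Proof.
move=> G H; rewrite /good (good_K G) /=.
rewrite sS_S.
have E : ((sS k + did_Tof (rR k) (rR k.+1)) == 
                 (sS k + (rR k :&: orth (rR k.+1))))%MS.
  by apply/eqmxP; apply: adds_eqmx => //; apply/eqmxP; exact: Tof_eq.
have E2 : (orth (sS k + (rR k :&: orth (rR k.+1)))%MS == rR k.+1)%MS.
  apply: orth_step; [by case/andP: G | exact: rR_sub].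
apply/eqmxP/eqmx_sym; exact: eqmx_trans (eqmxP (orth_eq E)) (eqmxP E2).
Qed.

End DIDsec.

Section GASsec.
Variable C : numClosedFieldType.
Variables (n K : nat) (M : 'I_K -> 'M[C]_n) (P : 'M[C]_n).
Hypothesis TP : trace_preserving M.
Hypothesis OP : orth_proj P.
Hypothesis GASH : GAS M P.

Let INV : Defs.invariant M P. Proof. by case: GASH. Qed.

Lemma tr_sum I (r : seq I) (F : I -> 'M[C]_n) : \tr (\sum_(i <- r) F i) = \sum_(i <- r) \tr (F i).
Proof. exact: (big_morph _ (fun A B => mxtraceD A B) (mxtrace0 _ _)). Qed.

Lemma kraus_tr X : \tr (kraus M X) = \tr X.
Proof.
rewrite /kraus tr_sum.
under eq_bigr => j _ do rewrite mxtrace_mulC mulmxA.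
by rewrite -tr_sum -mulmx_suml TP mul1mx.
Qed.

Lemma tr_le_norm (X : 'M[C]_n) : `|\tr X| <= mxnorm X.
Proof.
rewrite /mxnorm /mxtrace; apply: le_trans (ler_norm_sum _ _ _) _.
apply: ler_sum => i _.
rewrite (bigD1 i) //= lerDl; apply: sumr_ge0 => j _; exact: normr_ge0.
Qed.

Lemma trmxZ' p q (a : C) (A : 'M[C]_(p,q)) : (a *: A)^T = a *: A^T.
Proof. by apply/matrixP => i j; rewrite !mxE. Qed.
Lemma adjZ p q (a : C) (A : 'M[C]_(p,q)) : adj (a *: A) = a^* *: adj A.
Proof. by apply/matrixP => i j; rewrite /adj !mxE rmorphM. Qed.

Lemma gas_stop k : good M P k -> (rR M P k.+1 == rR M P k)%MS ->
   (rR M P k == (0 : 'M[C]_n))%MS.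
Proof.
move=> G E; set R := rR M P k.
case: (eqVneq R 0) => [-> | nz]; first by apply/eqmxP.
exfalso.
have [i ui] : exists i, row i R != 0.
  apply/existsP; apply: contraR nz => /existsPn H.
  by apply/eqP/row_matrixP => i; rewrite row0; apply/eqP/negbNE/H.
set u := row i R.
have uR : (u <= R)%MS by exact: row_sub.
have RI : forall j, (R *m (M j)^T <= R)%MS.
  move=> j; case/andP: E => _ /(submx_trans (submx_refl R)).
  rewrite rR_S mem_nextR => /andP [_ /forallP /(_ j)].
  by case/andP: G => _ /eqmxP ->.
have AI : forall q (A : 'M[C]_(q,n)) j, (A <= R)%MS -> (A *m (M j)^T <= R)%MS.
  by move=> q A j H; apply: submx_trans (RI j); exact: submxMr.
set c := (u *m adj u) 0 0.
have c_ge0 : 0 <= c by exact: gram_diag_ge0.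
have c_neq0 : c != 0.
  apply: contra ui => /eqP c0; apply/eqP; apply: gram0.
  by apply/matrixP => a b; rewrite !ord1 [RHS]mxE; exact: c0.
have cc : c^* = c by exact: geC0_conj.
set v := u^T.
set rho0 := c^-1 *: (v *m adj v).
have tr0 : \tr rho0 = 1.
  rewrite mxtraceZ mxtrace_mulC trace_mx11 /v adj_tr -trmx_mul mxE -/c.
  by rewrite mulVf.
have dens : density rho0.
  split; last exact: tr0. rewrite /psd; split.
    rewrite /Defs.hermitian /rho0 adjZ adjM adjK fmorphV; congr (_^-1 *: _); exact: cc.
  move=> w; rewrite /rho0 -scalemxAr -scalemxAl mxE.
  apply: mulr_ge0; first by rewrite invr_ge0.
  have -> : adj w *m (v *m adj v) *m w = (adj w *m v) *m adj (adj w *m v).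
    by rewrite adjM adjK !mulmxA.
  exact: gram_diag_ge0.
set Zp := fun X : 'M[C]_n => (X^T <= R)%MS.
have Z0 : Zp rho0.
  rewrite /Zp /rho0 trmxZ' trmx_mul /v trmxK; apply: scalemx_sub.
  by rewrite trmxK; apply: submx_trans uR; exact: submxMl.
have ZS X : Zp X -> Zp (kraus M X).
  move=> HX; rewrite /Zp /kraus trmx_sum'; apply: summx_sub => j _.
  rewrite !trmx_mul mulmxA; apply: AI.
  by apply: submx_trans HX; exact: submxMl.
have Zi m : Zp (iter m (kraus M) rho0).
  by elim: m => [|m IH] //=; exact: ZS.
have RK : (R <= ker_sp P)%MS.
  case/andP: G => /eqmxP HK _; rewrite -HK.
  exact: (Kk_sub0 TP OP INV k).
have PZ X : Zp X -> P *m X = 0.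
  move=> HX; have := submx_trans HX RK; rewrite /ker_sp sub_kermx -trmx_mul.
  by move=> /eqP /(congr1 trmx); rewrite trmxK trmx0.
have tri m : \tr (iter m (kraus M) rho0) = 1.
  by elim: m => [|m IH] //=; rewrite kraus_tr.
case: GASH => _ /(_ rho0 dens 1 ltr01) [N0 HN].
have := HN N0 (leqnn _).
rewrite (PZ _ (Zi N0)) mul0mx subr0.
have := tr_le_norm (iter N0 (kraus M) rho0); rewrite tri normr1 => h1 h2.
by have := le_lt_trans h1 h2; rewrite ltxx.
Qed.

End GASsec.

Section Final.
Variable C : numClosedFieldType.
Variables (n K : nat) (M : 'I_K -> 'M[C]_n) (P : 'M[C]_n).
Hypothesis TP : trace_preserving M.
Hypothesis OP : orth_proj P.
Hypothesis GASH : GAS M P.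

Let INV : Defs.invariant M P. Proof. by case: GASH. Qed.

Lemma stop_zero k : good M P k -> did_stop (rR M P k) (rR M P k.+1) ->
  (rR M P k.+1 == (0 : 'M[C]_n))%MS.
Proof.
move=> G; case/orP => // E.
have /eqmxP H := gas_stop TP OP GASH G E.
apply/andP; split; last exact: sub0mx.
by apply: submx_trans (rR_sub M P k) _; rewrite H sub0mx.
Qed.

Lemma good_all k : good M P k.
Proof.
elim: k => [|k IH]; first exact: good0.
by apply: (good_S TP OP INV IH); exact: stop_zero.
Qed.

Lemma Kk_eq k : (Kk M P k == rR M P k)%MS.
Proof. by case/andP: (good_all k). Qed.

Lemma supp_eq m : (supp (iter m (kraus_dual M) P) == sS M P m)%MS.
Proof.
case/andP: (good_all m) => /eqmxP HK HR.
have E1 : (supp (iter m (kraus_dual M) P) == orth (orth (sS M P m)))%MS.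
  apply: orth_eq; apply/eqmxP; exact: eqmx_trans HK (eqmxP HR).
apply/eqmxP; exact: eqmx_trans (eqmxP E1) (eqmxP (orthK _)).
Qed.

Lemma sS_sum m :
  (sS M P m == DID_S M P 1 + \sum_(1 <= i < m.+1) DID_T M P i)%MS.
Proof.
elim: m => [|m IH].
  by rewrite big_geq //; apply/eqmxP/eqmx_sym; exact: addsmx0.
rewrite big_nat_recr // sS_S addsmxA.
apply/eqmxP; apply: adds_eqmx; first exact/eqmxP.
by rewrite /DID_T /DID_R.
Qed.

Lemma Tof_K i : (1 <= i)%N ->
  (DID_T M P i == Kk M P i.-1 :&: orth (Kk M P i))%MS.
Proof.
case: i => // i _; rewrite /DID_T /DID_R /=.
have E1 := Tof_eq (stop_zero (good_all i)).
apply/eqmxP; apply: eqmx_trans (eqmxP E1) _.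
apply: cap_eqmx; first exact: eqmx_sym (eqmxP (Kk_eq i)).
apply/eqmxP; apply: orth_eq; apply/eqmxP; exact: eqmx_sym (eqmxP (Kk_eq i.+1)).
Qed.

Lemma charN N : DID_final M P N ->
  [/\ (1 <= N)%N, (Kk M P N == (0 : 'M[C]_n))%MS &
     forall j, (1 <= j < N)%N -> ~~ (Kk M P j == (0 : 'M[C]_n))%MS].
Proof.
case=> N1 [Hs Hns]; split => //.
  case: N N1 Hs Hns => // N _ Hs _.
  apply/eqmxP; apply: (eqmx_trans (eqmxP (Kk_eq N.+1))); apply/eqmxP.
  by apply: stop_zero (good_all N) _; rewrite /DID_R /= in Hs.
move=> j Hj; have := Hns j Hj.
case: j Hj => // j _; rewrite /DID_R /did_stop /= negb_or => /andP [_ H].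
apply: contra H => H; apply/eqmxP.
apply: (eqmx_trans (eqmx_sym (eqmxP (Kk_eq j.+1)))); exact/eqmxP.
Qed.

End Final.

Lemma tr_delta (C : numClosedFieldType) n (B : 'M[C]_n) i j :
  \tr (B *m delta_mx j i) = B i j.
Proof.
rewrite /mxtrace (bigD1 i) //= big1 ?addr0.
  rewrite mxE (bigD1 j) //= big1 ?addr0; first by rewrite mxE !eqxx mulr1.
  by move=> l hl; rewrite mxE (negbTE hl) mulr0.
move=> k hk; rewrite mxE big1 // => l _; by rewrite mxE (negbTE hk) andbF mulr0.
Qed.

Lemma dual_det (C : numClosedFieldType) n K (M : 'I_K -> 'M[C]_n) A i j :
  kraus_dual M A i j = \tr (A *m kraus M (delta_mx j i)).
Proof.
rewrite -tr_delta /kraus_dual /kraus mulmx_sumr mulmx_suml !tr_sum.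
apply: eq_bigr => k _.
by rewrite !mulmxA [RHS]mxtrace_mulC !mulmxA.
Qed.

Unset Implicit Arguments.

Theorem proposition6 (C : numClosedFieldType) (n K : nat)
    (M : 'I_K -> 'M[C]_n) (P : 'M[C]_n) (N : nat) :
  trace_preserving M -> orth_proj P -> GAS M P -> DID_final M P N ->
  (forall m, (1 <= m <= N)%N ->
     (supp (iter m (kraus_dual M) P) ==
        DID_S M P 1 + \sum_(1 <= i < m.+1) DID_T M P i)%MS) /\
  (forall m, (N < m)%N -> (supp (iter m (kraus_dual M) P) == 1%:M)%MS) /\
  (* independence from the operator-sum representation *)
  (forall (K' : nat) (M' : 'I_K' -> 'M[C]_n) (N' : nat),
     trace_preserving M' -> (forall rho, kraus M' rho = kraus M rho) ->
     DID_final M' P N' ->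
     N' = N /\ forall i, (1 <= i <= N)%N -> (DID_T M' P i == DID_T M P i)%MS).
Proof.
move=> TP OP GASH DF.
have INV : Defs.invariant M P by case: GASH.
have [N1 KN KnN] := charN TP OP GASH DF.
split.
  move=> m _; apply/eqmxP.
  exact: eqmx_trans (eqmxP (supp_eq TP OP GASH m)) (eqmxP (sS_sum M P m)).
split.
  move=> m Nm.
  have mono : forall d, (Kk M P (N + d) <= Kk M P N)%MS.
    elim=> [|d IH]; first by rewrite addn0.
    by rewrite addnS; exact: submx_trans (Kmono TP OP INV _) IH.
  have Km0 : (Kk M P m <= (0 : 'M[C]_n))%MS.
    rewrite -(subnKC (ltnW Nm)); apply: submx_trans (mono _) _.
    by case/andP: KN.
  apply/andP; split; first exact: submx1.
  change (1%:M <= orth (Kk M P m))%MS.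
  apply: submx_trans (orth_anti Km0).
  by case/andP: (orth0 C n).
move=> K' M' N' TP' HK DF'.
have ED A : kraus_dual M' A = kraus_dual M A.
  by apply/matrixP => i j; rewrite !dual_det HK.
have EI m : iter m (kraus_dual M') P = iter m (kraus_dual M) P.
  by elim: m => //= m ->; exact: ED.
have EKk m : Kk M' P m = Kk M P m by rewrite /Kk EI.
have GAS' : GAS M' P.
  case: GASH => I G; split.
    by move=> rho h1 h2; rewrite HK; exact: I rho h1 h2.
  move=> rho d eps e; have [N0 H] := G rho d eps e; exists N0 => m hm.
  have -> : iter m (kraus M') rho = iter m (kraus M) rho.
    by elim: m {hm} => //= m ->; exact: HK.
  exact: H.
have [N1' KN' KnN'] := charN TP' OP GAS' DF'.
split.
  case: (ltngtP N' N) => // h.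
    by have := KnN N'; rewrite N1' h -EKk KN' => /(_ isT).
  by have := KnN' N; rewrite N1 h EKk KN => /(_ isT).
move=> i /andP [i1 _].
apply/eqmxP; apply: eqmx_trans (eqmxP (Tof_K TP' OP GAS' i1)) _.
rewrite !EKk; exact: eqmx_sym (eqmxP (Tof_K TP OP GASH i1)).
Qed.
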